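(* Let $k\ge1$, $A\subseteq\mathbb{R}$ open, $x\in A$ and $f\in C^k(A,\mathbb{R})$. Then for all $h\in D_k$, $${}^\bullet f(x+h)=\sum_{i=0}^k\frac{h^i}{i!}\,f^{(i)}(x)\quad\text{in }{}^\bullet\mathbb{R},$$ and the real coefficients $f^{(i)}(x)$, $i=0,\dots,k$, are uniquely determined by this formula (i.e. if $c_0,\dots,c_k\in\mathbb{R}$ satisfy ${}^\bullet f(x+h)=\sum_{i=0}^k\frac{h^i}{i!}c_i$ for all $h\in D_k$, then $c_i=f^{(i)}(x)$).
   Context: A function $x:\mathbb{R}\to\mathbb{R}$ is nilpotent if $|x(t)-x(0)|^m=o(t)$ as $t\to0$ for some $m\in\mathbb{N}$; for $A\subseteq\mathbb{R}$, $\mathrm{Nil}(A)$ is the set of nilpotent functions with values in $A$; $x\sim y$ iff $x(t)=y(t)+o(t)$ as $t\to0$. ${}^\bullet A:=\mathrm{Nil}(A)/\sim\subseteq{}^\bullet\mathbb{R}:=\mathrm{Nil}(\mathbb{R})/\sim$ (a commutative ring under pointwise operations, reals identified with constant functions). For locally Lipschitz $g:A\to\mathbb{R}$, ${}^\bullet g([y]):=[g\circ y]$. $D:=\{h\in{}^\bullet\mathbb{R}:\limsup_{t\to0}|h(t)/t|<+\infty\}$ and $D_k:=\{h\in{}^\bullet\mathbb{R}: h^k\in D\}$; elements of $D_k$ have standard part $0$, so $x+h\in{}^\bullet A$. *)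

(* Defs.v *)
From Stdlib Require Import Reals Factorial.
From Coquelicot Require Import Coquelicot.
Open Scope R_scope.

Definition little_o_t (y : R -> R) : Prop :=
  is_lim (fun t => y t / t) 0 0.

Definition nilpotent (x : R -> R) : Prop :=
  exists m : nat, little_o_t (fun t => Rabs (x t - x 0) ^ m).

(* x ~ y iff x(t) = y(t) + o(t);  equality in the Fermat reals *R *)
Definition fsim (x y : R -> R) : Prop := little_o_t (fun t => x t - y t).

(* limsup_{t->0} |y(t)/t| < +oo, written out: |y(t)/t| is eventually
   bounded on a punctured neighbourhood of 0 *)
Definition in_D (y : R -> R) : Prop :=
  exists M delta : R, 0 < delta /\
    forall t, t <> 0 -> Rabs t < delta -> Rabs (y t / t) <= M.

Definition in_Dk (k : nat) (h : R -> R) : Prop :=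
  nilpotent h /\ in_D (fun t => h t ^ k).

Definition Ck (k : nat) (A : R -> Prop) (f : R -> R) : Prop :=
  (forall i : nat, (i <= k)%nat -> forall y, A y -> ex_derive_n f i y) /\
  (forall y, A y -> continuous (Derive_n f k) y).

(* the Fermat extension *g([y]) = [g o y], on representatives *)
Definition fext (g : R -> R) (y : R -> R) : R -> R := fun t => g (y t).

Definition taylor_sum (k : nat) (c : nat -> R) (h : R -> R) : R -> R :=
  fun t => sum_n (fun i => h t ^ i / INR (Factorial.fact i) * c i) k.

(* Main.v *)
Require Import Defs.
From Stdlib Require Import Reals Lra Lia Factorial.
From Coquelicot Require Import Coquelicot.
Open Scope R_scope.

Definition lim0 (g : R -> R) (l : R) := forall eps, 0 < eps -> exists delta, 0 < delta /\
  forall t, t <> 0 -> Rabs t < delta -> Rabs (g t - l) < eps.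

Lemma is_lim_lim0 g (l : R) : is_lim g 0 l -> lim0 g l.
Proof.
  intros H eps Heps. apply is_lim_spec in H. change (forall eps : posreal, locally' 0 (fun y => Rabs (g y - l) < eps)) in H. destruct (H (mkposreal eps Heps)) as [d Hd].
  exists d. split. apply cond_pos. intros t Ht1 Ht2. apply Hd; auto.
  change (Rabs (t - 0) < d). rewrite Rminus_0_r. auto.
Qed.

Lemma lim0_is_lim g (l : R) : lim0 g l -> is_lim g 0 l.
Proof. intro H. apply is_lim_spec. change (forall eps : posreal, locally' 0 (fun y => Rabs (g y - l) < eps)). intro eps. destruct (H eps (cond_pos eps)) as [d [Hd H1]].
  exists (mkposreal d Hd). intros y Hy Hy0. apply H1; auto.
  change (Rabs (y - 0) < d) in Hy. rewrite Rminus_0_r in Hy; auto. Qed.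

Lemma lim0_ext g1 g2 l : (forall t, t <> 0 -> g1 t = g2 t) -> lim0 g1 l -> lim0 g2 l.
Proof. intros E H eps He. destruct (H eps He) as [d [Hd H1]]. exists d; split; auto.
  intros t Ht Ht'. rewrite <- E; auto. Qed.

Lemma cont_eps (g : R -> R) y : continuous g y -> forall eps, 0 < eps -> exists delta, 0 < delta /\
  forall z, Rabs (z - y) < delta -> Rabs (g z - g y) < eps.
Proof. intros H eps He. destruct (H _ (locally_ball (g y) (mkposreal eps He))) as [d Hd].
  exists d. split. apply cond_pos. intros z Hz. apply (Hd z Hz). Qed.

Lemma open_eps (A : R -> Prop) x : open A -> A x -> exists delta, 0 < delta /\ forall z, Rabs (z - x) < delta -> A z.
Proof. intros H Hx. destruct (H x Hx) as [d Hd]. exists d; split. apply cond_pos. intros z Hz; apply Hd; exact Hz. Qed.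
Lemma LOC (n : nat) (A : R -> Prop) f x eta :
  (forall z, Rabs (z - x) < eta -> A z) ->
  (forall i, (i <= S n)%nat -> forall y, A y -> ex_derive_n f i y) ->
  forall p, Rabs (p - x) < eta -> forall j, (j <= S n)%nat ->
  locally p (fun y => forall k, (k <= j)%nat -> ex_derive_n f k y).
Proof.
  intros HA Hd p Hp j Hj.
  assert (Hpos : 0 < eta - Rabs (p - x)) by lra.
  exists (mkposreal _ Hpos). intros y Hy k Hk.
  change (Rabs (y - p) < eta - Rabs (p - x)) in Hy.
  apply Hd. lia. apply HA.
  pose proof (Rabs_triang (y-p) (p-x)) as T. replace (y-p+(p-x)) with (y-x) in T by ring. lra.
Qed.

Lemma TL2 (n : nat) (A : R -> Prop) f x eta :
  0 < eta -> (forall z, Rabs (z - x) < eta -> A z) ->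
  (forall i, (i <= S n)%nat -> forall y, A y -> ex_derive_n f i y) ->
  forall u, u <> 0 -> Rabs u < eta ->
  exists zeta, Rabs (zeta - x) < Rabs u /\
   f (x+u) = sum_f_R0 (fun m => u^m / INR (fact m) * Derive_n f m x) n
             + u^(S n)/INR (fact (S n)) * Derive_n f (S n) zeta.
Proof.
  intros Heta HA Hd u Hu0 Hu.
  destruct (Rlt_or_le 0 u) as [Hp|Hn].
  - rewrite Rabs_right in Hu by lra.
    destruct (Taylor_Lagrange f n x (x+u)) as [z [Hz E]]. lra.
    { intros t Ht k Hk. apply Hd; auto. apply HA. rewrite Rabs_right; lra. }
    exists z. split. rewrite Rabs_right by lra. rewrite Rabs_right by lra. lra.
    replace (x+u-x) with u in E by ring. exact E.
  - assert (Hn' : u < 0) by lra. clear Hn.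
    rewrite Rabs_left in Hu by lra.
    destruct (Taylor_Lagrange (fun y => f (-y)) n (-x) (-x-u)) as [z [Hz E]]. lra.
    { intros t Ht k Hk. apply ex_derive_n_comp_opp.
      apply (LOC n A f x eta HA Hd). unfold Rabs; destruct Rcase_abs; lra. auto. }
    exists (-z). split. rewrite Rabs_left by lra. unfold Rabs; destruct Rcase_abs; lra.
    replace (- (-x-u)) with (x+u) in E by ring.
    replace (-x-u - -x) with (-u) in E by ring.
    rewrite E.
    assert (P : forall m, (-u)^m = (-1)^m * u^m).
    { intro m. replace (-u) with (-1*u) by ring. apply Rpow_mult_distr. }
    assert (Q : forall m, (-1)^m * (-1)^m = 1).
    { intro m. rewrite <- Rpow_mult_distr. replace (-1 * -1) with 1 by ring. apply pow1. }
    f_equal.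
    + apply sum_eq. intros m Hm. rewrite Derive_n_comp_opp.
      * rewrite Ropp_involutive, P.
        transitivity (((-1)^m * (-1)^m) * (u^m / INR (fact m) * Derive_n f m x)); [unfold Rdiv; ring| rewrite Q; ring].
      * rewrite Ropp_involutive. apply (LOC n A f x eta HA Hd). rewrite Rminus_diag, Rabs_R0; lra. lia.
    + rewrite Derive_n_comp_opp.
      * rewrite P.
        transitivity (((-1)^(S n) * (-1)^(S n)) * (u^(S n) / INR (fact (S n)) * Derive_n f (S n) (-z))); [unfold Rdiv; ring| rewrite Q; ring].
      * apply (LOC n A f x eta HA Hd). unfold Rabs; destruct Rcase_abs; lra. lia.
Qed.

Lemma sum0 f x N : sum_f_R0 (fun i => 0^i / INR (fact i) * Derive_n f i x) N = f x.
Proof. induction N.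
  - simpl. unfold Rdiv. rewrite Rinv_1. ring.
  - rewrite tech5, IHN. rewrite pow_i by lia. unfold Rdiv. ring.
Qed.

Lemma TB n A f x : open A -> A x -> Ck (S n) A f -> forall eps, 0 < eps ->
  exists eta, 0 < eta /\ forall u, Rabs u < eta ->
  Rabs (f (x+u) - sum_n (fun i => u^i / INR (fact i) * Derive_n f i x) (S n)) <= eps * Rabs u ^ (S n).
Proof.
  intros HO Hx [Hd Hc] eps He.
  destruct (open_eps A x HO Hx) as [e1 [He1 HA]].
  assert (HF : 0 < INR (fact (S n))) by (apply lt_0_INR, lt_O_fact).
  destruct (cont_eps _ x (Hc x Hx) (eps * INR (fact (S n)))) as [e2 [He2 Hc2]].
  { apply Rmult_lt_0_compat; auto. }
  exists (Rmin e1 e2). split. apply Rmin_pos; auto.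
  intros u Hu. rewrite sum_n_Reals.
  destruct (Req_dec u 0) as [Hu0|Hu0].
  - subst. rewrite Rplus_0_r, sum0, Rminus_diag, Rabs_R0, pow_i by lia. lra.
  - destruct (TL2 n A f x e1 He1 HA Hd u Hu0) as [z [Hz E]].
    { pose proof (Rmin_l e1 e2); lra. }
    rewrite tech5, E.
    replace (sum_f_R0 (fun m : nat => u ^ m / INR (fact m) * Derive_n f m x) n +
      u ^ S n / INR (fact (S n)) * Derive_n f (S n) z -
      (sum_f_R0 (fun i : nat => u ^ i / INR (fact i) * Derive_n f i x) n +
       u ^ S n / INR (fact (S n)) * Derive_n f (S n) x))
      with (u ^ S n * ((Derive_n f (S n) z - Derive_n f (S n) x) * / INR (fact (S n))))
      by (unfold Rdiv; ring).
    rewrite Rabs_mult, RPow_abs, Rabs_mult, (Rabs_right (/ _)).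
    2: { apply Rle_ge, Rlt_le, Rinv_0_lt_compat; auto. }
    rewrite Rmult_comm. apply Rmult_le_compat_r. apply Rabs_pos.
    assert (Hz2 : Rabs (z - x) < e2) by (pose proof (Rmin_r e1 e2); lra).
    specialize (Hc2 z Hz2).
    apply Rmult_le_reg_r with (INR (fact (S n))); auto.
    rewrite Rmult_assoc, Rinv_l by lra. lra.
Qed.

Lemma DIV a b t c M : t <> 0 -> 0 <= c -> Rabs a <= c * Rabs b -> Rabs (b / t) <= M ->
  Rabs (a / t) <= c * M.
Proof. intros Ht Hc Ha Hb. unfold Rdiv in *. rewrite Rabs_mult, Rabs_inv in *.
  assert (0 < / Rabs t) by (apply Rinv_0_lt_compat, Rabs_pos_lt; auto).
  apply Rle_trans with (c * Rabs b * / Rabs t). apply Rmult_le_compat_r; lra.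
  rewrite Rmult_assoc. apply Rmult_le_compat_l; auto.
Qed.

Lemma part1 k A f x : (1 <= k)%nat -> open A -> A x -> Ck k A f ->
  forall h : R -> R, in_Dk k h ->
     fsim (fext f (fun t => x + h t)) (taylor_sum k (fun i => Derive_n f i x) h).
Proof.
  intros Hk HO Hx HC h [_ [M [d0 [Hd0 HM]]]].
  destruct k as [|n]; [lia|].
  unfold fsim, little_o_t. apply lim0_is_lim. intros eps He.
  set (M' := Rabs M + 1).
  assert (HM' : 0 < M') by (unfold M'; pose proof (Rabs_pos M); lra).
  destruct (TB n A f x HO Hx HC (eps / M')) as [eta [Heta HT]].
  { apply Rdiv_lt_0_compat; auto. }
  assert (Hep : 0 < eta ^ S n) by (apply pow_lt; auto).
  exists (Rmin d0 (eta^(S n) / M')). split.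
  { apply Rmin_pos; auto. apply Rdiv_lt_0_compat; auto. }
  intros t Ht0 Ht. unfold fext, taylor_sum. rewrite Rminus_0_r.
  assert (Htd : Rabs t < d0) by (pose proof (Rmin_l d0 (eta^(S n) / M')); lra).
  assert (Hte : Rabs t < eta^(S n) / M') by (pose proof (Rmin_r d0 (eta^(S n) / M')); lra).
  specialize (HM t Ht0 Htd).
  assert (Hh : Rabs (h t) < eta).
  { destruct (Rlt_or_le (Rabs (h t)) eta) as [?|Hc]; auto. exfalso.
    assert (E1 : eta ^ S n <= Rabs (h t) ^ S n) by (apply pow_incr; lra).
    rewrite RPow_abs in E1.
    assert (E2 : Rabs (h t ^ S n) = Rabs (h t ^ S n / t) * Rabs t).
    { rewrite <- Rabs_mult. f_equal. field. auto. }
    assert (E3 : Rabs (h t ^ S n / t) * Rabs t <= M' * Rabs t).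
    { apply Rmult_le_compat_r. apply Rabs_pos. unfold M'. pose proof (Rle_abs M). lra. }
    assert (E4 : M' * Rabs t < eta ^ S n).
    { apply Rmult_lt_reg_r with (/ M'). apply Rinv_0_lt_compat; auto.
      rewrite (Rmult_comm M'), Rmult_assoc, Rinv_r by lra. rewrite Rmult_1_r. exact Hte. }
    lra. }
  specialize (HT (h t) Hh).
  apply Rle_lt_trans with (eps / M' * M).
  { apply DIV with (b := h t ^ S n); auto.
    - apply Rlt_le, Rdiv_lt_0_compat; auto.
    - rewrite <- RPow_abs. exact HT. }
  apply Rle_lt_trans with (eps / M' * Rabs M).
  { apply Rmult_le_compat_l. apply Rlt_le, Rdiv_lt_0_compat; auto. apply Rle_abs. }
  unfold Rdiv. rewrite Rmult_assoc. rewrite <- (Rmult_1_r eps) at 2.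
  apply Rmult_lt_compat_l; auto.
  apply Rmult_lt_reg_r with M'; auto. rewrite Rmult_comm, <- Rmult_assoc, Rinv_r by lra. unfold M'; lra.
Qed.

Definition rk (k : nat) (t : R) : R := if Req_dec_T t 0 then 0 else Rpower (Rabs t) (/ INR k).

Lemma rk0 k : rk k 0 = 0.
Proof. unfold rk. destruct (Req_dec_T 0 0); congruence. Qed.

Lemma rk_pos k t : t <> 0 -> 0 < rk k t.
Proof. intro H. unfold rk. destruct (Req_dec_T t 0); [congruence|]. unfold Rpower. apply exp_pos. Qed.

Lemma rk_pow k t : (1 <= k)%nat -> t <> 0 -> rk k t ^ k = Rabs t.
Proof. intros Hk H. unfold rk. destruct (Req_dec_T t 0); [congruence|].
  assert (Ht : 0 < Rabs t) by (apply Rabs_pos_lt; auto).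
  rewrite <- Rpower_pow by (unfold Rpower; apply exp_pos).
  rewrite Rpower_mult, Rinv_l, Rpower_1; auto.
  apply not_0_INR. lia.
Qed.

Lemma rk_small k eps t : (1 <= k)%nat -> 0 < eps -> t <> 0 -> Rabs t < eps ^ k -> rk k t < eps.
Proof. intros Hk He Ht H. destruct (Rlt_or_le (rk k t) eps) as [?|Hc]; auto. exfalso.
  assert (eps ^ k <= rk k t ^ k) by (apply pow_incr; lra). rewrite rk_pow in H0; auto. lra. Qed.

Lemma rk_ge k p t : (1 <= k)%nat -> (p <= k)%nat -> t <> 0 -> Rabs t < 1 -> Rabs t <= rk k t ^ p.
Proof. intros Hk Hp Ht H1.
  assert (Hr1 : rk k t < 1) by (apply rk_small; auto; [lra| rewrite pow1; auto]).
  pose proof (rk_pos k t Ht).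
  rewrite <- rk_pow with (k := k); auto.
  assert (E : rk k t ^ k = rk k t ^ p * rk k t ^ (k - p)) by (rewrite <- pow_add; f_equal; lia). rewrite E.
  assert (0 <= rk k t ^ p) by (apply pow_le; lra).
  assert (rk k t ^ (k - p) <= 1) by (rewrite <- (pow1 (k - p)); apply pow_incr; lra).
  nra.
Qed.

Lemma abs_div_self t : t <> 0 -> Rabs (Rabs t / t) = 1.
Proof. intro H. unfold Rdiv. rewrite Rabs_mult, Rabs_inv, Rabs_Rabsolu. apply Rinv_r.
  apply Rabs_no_R0; auto. Qed.

Lemma rk_Dk k : (1 <= k)%nat -> in_Dk k (rk k).
Proof. intro Hk. split.
  - exists (S k). unfold little_o_t. apply lim0_is_lim. intros eps He.
    exists (eps ^ k). split. apply pow_lt; auto.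
    intros t Ht0 Ht. rewrite rk0, !Rminus_0_r.
    pose proof (rk_pos k t Ht0).
    rewrite (Rabs_right (rk k t)) by lra. simpl pow. rewrite rk_pow by auto.
    unfold Rdiv. rewrite Rmult_assoc. fold (Rabs t / t).
    rewrite Rabs_mult, abs_div_self, Rmult_1_r by auto.
    rewrite Rabs_right by lra. apply rk_small; auto.
  - exists 1, 1. split. lra. intros t Ht0 Ht. rewrite rk_pow by auto. rewrite abs_div_self; lra.
Qed.

Definition Spoly (a : nat -> R) n u := sum_f_R0 (fun i => a i * u ^ i) n.

Lemma Spoly_bound a n u : Rabs u <= 1 ->
  Rabs (Spoly a n u - a 0%nat) <= Rabs u * sum_f_R0 (fun i => Rabs (a i)) n.
Proof. intro Hu. induction n.
  - unfold Spoly. simpl. replace (a 0%nat * 1 - a 0%nat) with 0 by ring. rewrite Rabs_R0.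
    apply Rmult_le_pos; apply Rabs_pos.
  - unfold Spoly in *. rewrite !tech5.
    replace (sum_f_R0 (fun i : nat => a i * u ^ i) n + a (S n) * u ^ S n - a 0%nat)
      with ((sum_f_R0 (fun i : nat => a i * u ^ i) n - a 0%nat) + a (S n) * u ^ S n) by ring.
    eapply Rle_trans. apply Rabs_triang.
    rewrite Rmult_plus_distr_l.
    apply Rplus_le_compat; auto.
    rewrite Rabs_mult, <- RPow_abs. simpl pow.
    assert (Rabs u ^ n <= 1) by (rewrite <- (pow1 n); apply pow_incr; split; [apply Rabs_pos|lra]).
    assert (0 <= Rabs u ^ n) by (apply pow_le, Rabs_pos).
    apply Rle_trans with (Rabs (a (S n)) * (Rabs u * 1)). apply Rmult_le_compat_l; [apply Rabs_pos|]. apply Rmult_le_compat_l; [apply Rabs_pos| auto]. rewrite Rmult_1_r, Rmult_comm; lra.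
Qed.

Lemma Spoly_lim k a n : (1 <= k)%nat -> lim0 (fun t => Spoly a n (rk k t)) (a 0%nat).
Proof. intros Hk eps He.
  set (C := sum_f_R0 (fun i => Rabs (a i)) n).
  assert (HC : 0 <= C) by (apply cond_pos_sum; intro; apply Rabs_pos).
  set (d := Rmin 1 (eps / (C + 1))).
  assert (Hd : 0 < d) by (apply Rmin_pos; [lra| apply Rdiv_lt_0_compat; lra]).
  exists (d ^ k). split. apply pow_lt; auto.
  intros t Ht0 Ht. pose proof (rk_small k d t Hk Hd Ht0 Ht). pose proof (rk_pos k t Ht0).
  assert (Hd1 : d <= 1) by apply Rmin_l.
  assert (Hd2 : d <= eps / (C + 1)) by apply Rmin_r.
  eapply Rle_lt_trans. apply Spoly_bound. rewrite Rabs_right; lra.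
  rewrite Rabs_right by lra.
  apply Rle_lt_trans with (eps / (C+1) * C). apply Rmult_le_compat_r; lra.
  unfold Rdiv. rewrite Rmult_assoc. rewrite <- (Rmult_1_r eps) at 2. apply Rmult_lt_compat_l; auto.
  apply Rmult_lt_reg_l with (C + 1). lra. rewrite <- Rmult_assoc, Rinv_r by lra. lra.
Qed.

Lemma Klem k p (s : R -> R) L : (1 <= k)%nat -> (p <= k)%nat ->
  lim0 (fun t => rk k t ^ p * s t / t) 0 -> lim0 s L -> L = 0.
Proof. intros Hk Hp H1 H2. destruct (Req_dec L 0) as [|HL]; auto. exfalso.
  assert (HLp : 0 < Rabs L / 2) by (pose proof (Rabs_pos_lt L HL); lra).
  destruct (H1 _ HLp) as [d1 [Hd1 G1]]. destruct (H2 _ HLp) as [d2 [Hd2 G2]].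
  set (t := Rmin 1 (Rmin d1 d2) / 2).
  assert (Hm : 0 < Rmin 1 (Rmin d1 d2)) by (repeat apply Rmin_pos; lra).
  assert (Ht : 0 < t) by (unfold t; lra).
  assert (Hm1 := Rmin_l 1 (Rmin d1 d2)). assert (Hm2 := Rmin_r 1 (Rmin d1 d2)).
  assert (Hm3 := Rmin_l d1 d2). assert (Hm4 := Rmin_r d1 d2).
  assert (Hta : Rabs t = t) by (apply Rabs_right; lra).
  assert (Ht0 : t <> 0) by lra.
  specialize (G1 t Ht0 ltac:(unfold t in *; lra)). specialize (G2 t Ht0 ltac:(unfold t in *; lra)).
  rewrite Rminus_0_r in G1.
  pose proof (rk_ge k p t Hk Hp Ht0 ltac:(unfold t in *; lra)) as Hge.
  set (X := Rabs (rk k t ^ p * s t / t)) in *.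
  assert (EX0 : X * Rabs t = rk k t ^ p * Rabs (s t)).
  { unfold X. rewrite <- Rabs_mult. replace (rk k t ^ p * s t / t * t) with (rk k t ^ p * s t) by (field; auto).
    rewrite Rabs_mult, (Rabs_right (rk k t ^ p)); auto. apply Rle_ge, pow_le. pose proof (rk_pos k t Ht0); lra. }
  assert (EX : X * t = rk k t ^ p * Rabs (s t)) by (rewrite <- EX0, Hta; auto).
  assert (Hs : Rabs (s t) <= X).
  { apply Rmult_le_reg_r with t; auto. rewrite EX. rewrite Hta in Hge.
    rewrite Rmult_comm. apply Rmult_le_compat_r; auto. apply Rabs_pos. }
  pose proof (Rabs_triang (s t) (L - s t)). replace (s t + (L - s t)) with L in H by ring.
  rewrite Rabs_minus_sym in H. lra.
Qed.

Lemma Spoly_S a n u : Spoly a (S n) u = a 0%nat + u * Spoly (fun i => a (S i)) n u.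
Proof. unfold Spoly. rewrite decomp_sum by lia. simpl pred. rewrite pow_O, Rmult_1_r. f_equal.
  rewrite scal_sum. apply sum_eq. intros i _. simpl pow. ring. Qed.

Lemma POLY k n : (1 <= k)%nat -> forall p a, (p + n <= k)%nat ->
  lim0 (fun t => rk k t ^ p * Spoly a n (rk k t) / t) 0 -> forall i, (i <= n)%nat -> a i = 0.
Proof. intro Hk. induction n; intros p a Hpn H.
  - assert (a 0%nat = 0). { apply (Klem k p (fun t => Spoly a 0 (rk k t))); auto. lia. apply Spoly_lim; auto. }
    intros i Hi. replace i with 0%nat by lia. auto.
  - assert (H0 : a 0%nat = 0). { apply (Klem k p (fun t => Spoly a (S n) (rk k t))); auto. lia. apply Spoly_lim; auto. }
    assert (IH := IHn (S p) (fun i => a (S i)) ltac:(lia)).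
    assert (IH' : forall i, (i <= n)%nat -> a (S i) = 0).
    { apply IH. eapply lim0_ext; [|exact H]. intros t _. simpl. rewrite Spoly_S, H0. unfold Rdiv; ring. }
    intros [|i] Hi; auto. apply IH'. lia.
Qed.

Lemma lim0_minus g1 g2 : lim0 g1 0 -> lim0 g2 0 -> lim0 (fun t => g1 t - g2 t) 0.
Proof. intros H1 H2 eps He. destruct (H1 (eps/2)) as [d1 [Hd1 G1]]. lra.
  destruct (H2 (eps/2)) as [d2 [Hd2 G2]]. lra.
  exists (Rmin d1 d2). split. apply Rmin_pos; auto. intros t Ht Ht'.
  assert (A1 := Rmin_l d1 d2). assert (A2 := Rmin_r d1 d2).
  specialize (G1 t Ht ltac:(lra)). specialize (G2 t Ht ltac:(lra)).
  rewrite Rminus_0_r in *. pose proof (Rabs_triang (g1 t) (- g2 t)). rewrite Rabs_Ropp in H. replace (g1 t - g2 t) with (g1 t + - g2 t) by ring. lra.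
Qed.

Theorem mainTheorem13 (k : nat) (A : R -> Prop) (x : R) (f : R -> R) :
  (1 <= k)%nat -> open A -> A x -> Ck k A f ->
  (forall h : R -> R, in_Dk k h ->
     fsim (fext f (fun t => x + h t)) (taylor_sum k (fun i => Derive_n f i x) h))
  /\
  (forall c : nat -> R,
     (forall h : R -> R, in_Dk k h ->
        fsim (fext f (fun t => x + h t)) (taylor_sum k c h)) ->
     forall i : nat, (i <= k)%nat -> c i = Derive_n f i x).
Proof.
  intros Hk HO Hx HC. split.
  - exact (part1 k A f x Hk HO Hx HC).
  - intros c Hc.
    assert (H1 := is_lim_lim0 _ _ (part1 k A f x Hk HO Hx HC (rk k) (rk_Dk k Hk))).
    assert (H2 := is_lim_lim0 _ _ (Hc (rk k) (rk_Dk k Hk))).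
    assert (H3 := lim0_minus _ _ H1 H2).
    set (a := fun i => (c i - Derive_n f i x) / INR (fact i)).
    assert (Ha : forall i, (i <= k)%nat -> a i = 0).
    { apply (POLY k k Hk 0 a). lia. eapply lim0_ext; [|exact H3].
      intros t Ht. simpl. unfold fext, taylor_sum, Spoly. rewrite !sum_n_Reals.
      replace (sum_f_R0 (fun i : nat => a i * rk k t ^ i) k) with
        (sum_f_R0 (fun i => rk k t ^ i / INR (fact i) * c i) k -
         sum_f_R0 (fun i => rk k t ^ i / INR (fact i) * Derive_n f i x) k).
      field; auto.
      rewrite <- minus_sum. apply sum_eq. intros i _. unfold a. field. apply INR_fact_neq_0. }
    intros i Hi. specialize (Ha i Hi). unfold a in Ha.
    assert (HF := INR_fact_neq_0 i).
    apply Rminus_diag_uniq.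
    replace (c i - Derive_n f i x) with ((c i - Derive_n f i x) / INR (fact i) * INR (fact i)) by (field; auto).
    rewrite Ha. ring.
Qed.
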